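(* Let $\mathfrak{g}'\to\mathfrak{g}$ be a nontrivial deformation of finite-dimensional real Lie algebras. If the polynomial $P_T(\mathfrak{g}')-P_T(\mathfrak{g})$ has a negative coefficient, then the deformation is not of plateau type.
   Context: For a finite-dimensional real Lie algebra $\mathfrak{h}$, $b_i(\mathfrak{h})=\dim H^i(\mathfrak{h},\mathbb{R})$ (cohomology with trivial coefficients) and the Poincaré polynomial is $P_T(\mathfrak{h})=1+\sum_{i=1}^{\dim\mathfrak{h}}b_i(\mathfrak{h})T^i$. A deformation $\mathfrak{g}'\to\mathfrak{g}$ is a family $\mathfrak{g}_t$, $t\in[0,1]$, of Lie algebra structures on a fixed vector space, depending continuously on $t$, with $\mathfrak{g}_0=\mathfrak{g}'$ and $\mathfrak{g}_1\cong\mathfrak{g}$; it is nontrivial if $\mathfrak{g}\not\cong\mathfrak{g}'$. It is of plateau type if $\mathfrak{g}_0\not\cong\mathfrak{g}_1$ and $\mathfrak{g}_t\cong\mathfrak{g}_1$ for all $t\in(0,1]$. *)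

(* Defs.v *)
From HB Require Import structures.
From mathcomp Require Import all_boot all_order all_algebra all_fingroup.
From mathcomp Require Import all_classical all_reals all_analysis.
Set Implicit Arguments. Unset Strict Implicit. Unset Printing Implicit Defensive.
Import Order.TTheory GRing.Theory Num.Theory numFieldNormedType.Exports.
Local Open Scope ring_scope.

Section LieDefs.
Variable R : realType.

(* A Lie algebra structure on R^n, given by structure constants w.r.t. the
   standard basis e_0..e_{n-1}:  [e_i, e_j] = \sum_k c i j k e_k. *)
Definition sconst (n : nat) := 'I_n -> 'I_n -> 'I_n -> R.

Definition is_lie (n : nat) (c : sconst n) : Prop :=
  (forall i j k, c i j k = - c j i k) /\
  (forall i j k l,
     \sum_(m < n) (c i j m * c m k l + c j k m * c m i l + c k i m * c m j l) = 0).

Definition lbr (n : nat) (c : sconst n) (u v : 'rV[R]_n) : 'rV[R]_n :=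
  \row_k \sum_(i < n) \sum_(j < n) u 0 i * v 0 j * c i j k.

Definition lie_iso (n : nat) (c c' : sconst n) : Prop :=
  exists A : 'M[R]_n, A \in unitmx /\
    forall u v : 'rV[R]_n, lbr c u v *m A = lbr c' (u *m A) (v *m A).

(* An i-cochain is
   a function on i-tuples of basis indices; it corresponds to a multilinear
   map g^i -> R, and the i-cochains of the complex are the alternating ones. *)
Definition cochain (n i : nat) := {ffun {ffun 'I_i -> 'I_n} -> R^o}.

Definition swap_args (n i : nat) (p q : 'I_i) (x : {ffun 'I_i -> 'I_n})
  : {ffun 'I_i -> 'I_n} := [ffun l => x (tperm p q l)].

Definition alt_space (n i : nat) : {vspace cochain n i} :=
  (\bigcap_(pq : 'I_i * 'I_i | (pq.1 < pq.2)%N)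
     lker (linfun (fun f : cochain n i =>
        [ffun x => (f (swap_args pq.1 pq.2 x) + f x)%R] : cochain n i)))%VS.

(* the tuple (m, x_0, ..., \hat{x_j}, ..., \hat{x_k}, ..., x_i) *)
Definition ins_rem (n i : nat) (m : 'I_n) (j k : 'I_i.+1)
  (x : {ffun 'I_i.+1 -> 'I_n}) : {ffun 'I_i -> 'I_n} :=
  [ffun l : 'I_i => if val l == 0%N then m
     else x (nth j [seq a <- enum 'I_i.+1 | (a != j) && (a != k)] (val l).-1)].

Definition ce_diff_fun (n : nat) (c : sconst n) (i : nat) (f : cochain n i)
  : cochain n i.+1 :=
  [ffun x : {ffun 'I_i.+1 -> 'I_n} => \sum_(j < i.+1) \sum_(k < i.+1 | (j < k)%N)
      (-1) ^+ (j + k) * \sum_(m < n) c (x j) (x k) m * f (ins_rem m j k x)].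

Definition ce_diff (n : nat) (c : sconst n) (i : nat)
  : 'Hom(cochain n i, cochain n i.+1) := linfun (@ce_diff_fun n c i).

Definition cocycles (n : nat) (c : sconst n) (i : nat) : {vspace cochain n i} :=
  (alt_space n i :&: lker (ce_diff c i))%VS.

Definition betti (n : nat) (c : sconst n) (i : nat) : nat :=
  match i with
  | 0 => \dim (cocycles c 0)
  | i'.+1 => (\dim (cocycles c i'.+1) - \dim (ce_diff c i' @: alt_space n i'))%N
  end.

Definition poincare (n : nat) (c : sconst n) : {poly int} :=
  1 + \sum_(1 <= i < n.+1) (betti c i)%:Z *: 'X^i.

Definition is_deformation (n : nat) (C : R -> sconst n) (c' c : sconst n) : Prop :=
  (forall t : R, 0 <= t <= 1 -> is_lie (C t)) /\
  (forall i j k, {within [set t : R | 0 <= t <= 1], continuous (fun t : R => C t i j k)}%classic) /\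
  C 0 = c' /\ lie_iso (C 1) c.

Definition plateau (n : nat) (C : R -> sconst n) : Prop :=
  ~ lie_iso (C 0) (C 1) /\ (forall t : R, 0 < t <= 1 -> lie_iso (C t) (C 1)).

End LieDefs.

(* Main.v *)
Require Import Defs.
From HB Require Import structures.
From mathcomp Require Import all_boot all_order all_algebra all_fingroup.
From mathcomp Require Import all_classical all_reals all_analysis.
From mathcomp Require Import ring lra zify.
Import VectorInternalTheory.
Import Order.TTheory GRing.Theory Num.Theory numFieldNormedType.Exports.
Set Implicit Arguments. Unset Strict Implicit. Unset Printing Implicit Defensive.
Local Open Scope ring_scope.

Lemma linfunE (K : fieldType) (aT rT : vectType K) (h : aT -> rT) (hl : linear h) u :
  linfun h u = h u.
Proof.
pose L := GRing.isLinear.Build K aT rT _ _ hl.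
pose F : {linear aT -> rT} := HB.pack h L.
exact: (lfunE F).
Qed.

Section A.
Variable R : realType.
Variable n : nat.

Lemma ce_diff_fun_lin (c : sconst R n) i : linear (@ce_diff_fun R n c i).
Proof.
move=> a f g; apply/ffunP => x; rewrite !ffunE.
have sE : forall y : R^o, a *: y = a * y := fun _ => erefl. rewrite sE.
rewrite mulr_sumr -big_split /=; apply: eq_bigr => j _.
rewrite mulr_sumr -big_split /=; apply: eq_bigr => k _.
rewrite !mulr_sumr -big_split /=; apply: eq_bigr => m _.
rewrite !ffunE; rewrite sE; ring.
Qed.

Lemma ce_diffE (c : sconst R n) i f : ce_diff c i f = ce_diff_fun c f.
Proof.
rewrite /ce_diff.
pose L := GRing.isLinear.Build R (cochain R n i) (cochain R n i.+1) _ _ (@ce_diff_fun_lin c i).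
pose F : {linear cochain R n i -> cochain R n i.+1} := HB.pack (@ce_diff_fun R n c i) L.
exact: (lfunE F).
Qed.
Lemma alt_spaceP i (f : cochain R n i) :
  reflect (forall p q : 'I_i, (p < q)%N -> forall x, f (swap_args p q x) = - f x)
    (f \in alt_space R n i).
Proof.
have lin : forall p q : 'I_i, linear (fun f : cochain R n i =>
        [ffun x => (f (swap_args p q x) + f x)%R] : cochain R n i).
  move=> p q a g h; apply/ffunP => x; rewrite !ffunE /=.
  have sE : forall y : R^o, a *: y = a * y := fun _ => erefl.
  rewrite !sE; ring.
rewrite /alt_space memvE; apply: (iffP subv_bigcapP) => H.
- move=> p q pq x; have := H (p, q) pq.
  rewrite -memvE memv_ker linfunE // => /eqP/ffunP/(_ x); rewrite !ffunE => /eqP.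
  by rewrite addr_eq0 => /eqP.
- move=> [p q] /= pq; rewrite -memvE memv_ker linfunE //; apply/eqP/ffunP => x.
  by rewrite !ffunE H // addNr.
Qed.
Definition ev i (f : cochain R n i) (v : 'I_i -> 'rV[R]_n) : R :=
  \sum_(y : {ffun 'I_i -> 'I_n}) (\prod_l v l 0 (y l)) * f y.

Definition pull i (A : 'M[R]_n) (f : cochain R n i) : cochain R n i :=
  [ffun x : {ffun 'I_i -> 'I_n} => ev f (fun l => row (x l) A)].

Lemma pullE i A (f : cochain R n i) (x : {ffun 'I_i -> 'I_n}) :
  pull A f x = \sum_(y : {ffun 'I_i -> 'I_n}) (\prod_l A (x l) (y l)) * f y.
Proof.
rewrite ffunE /ev; apply: eq_bigr => y _; congr (_ * _).
by apply: eq_bigr => l _; rewrite mxE.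
Qed.

Lemma pull_lin i A : linear (@pull i A).
Proof.
move=> a f g; apply/ffunP => x; rewrite !ffunE.
have sE : forall y : R^o, a *: y = a * y := fun _ => erefl.
rewrite /ev sE mulr_sumr -big_split /=; apply: eq_bigr => y _.
rewrite !ffunE sE; ring.
Qed.

Lemma pull_mul i A B (f : cochain R n i) : pull A (pull B f) = pull (A *m B) f.
Proof.
apply/ffunP => x; rewrite !pullE.
under eq_bigr do rewrite pullE mulr_sumr.
rewrite exchange_big /=; apply: eq_bigr => z _.
under eq_bigr do rewrite mulrA -big_split /=.
rewrite -mulr_suml; congr (_ * _).
rewrite -(bigA_distr_bigA (fun l a => A (x l) a * B a (z l))) /=.
apply: eq_bigr => l _; rewrite mxE; apply: eq_bigr => a _; by [].
Qed.

Lemma pull1 i (f : cochain R n i) : pull 1%:M f = f.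
Proof.
apply/ffunP => x; rewrite pullE (bigD1 x) //=.
rewrite [X in _ + X]big1 ?addr0.
  by rewrite big1 ?mul1r // => l _; rewrite mxE eqxx.
move=> y yx; have [l ly] : exists l, x l != y l.
  apply/existsP; apply: contraR yx; rewrite negb_exists => /forallP H.
  by apply/eqP/ffunP => l; have := H l; rewrite negbK => /eqP.
by rewrite (bigD1 l) //= mxE (negbTE ly) mul0r mul0r.
Qed.

Lemma swapK i (p q : 'I_i) : involutive (@swap_args n i p q).
Proof. by move=> y; apply/ffunP => l; rewrite !ffunE tpermK. Qed.

Lemma pull_alt i A (f : cochain R n i) : f \in alt_space R n i -> pull A f \in alt_space R n i.
Proof.
move/alt_spaceP => H; apply/alt_spaceP => p q pq x.
rewrite !pullE (reindex_inj (inv_inj (@swapK i p q))) /= -sumrN.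
apply: eq_bigr => y _; rewrite H // mulrN; congr (- (_ * _)).
rewrite (reindex_inj (inv_inj (tpermK p q))) /=.
by apply: eq_bigr => l _; rewrite !ffunE !tpermK.
Qed.

End A.

Section C.
Variable R : realType.
Variable n : nat.

Lemma sum_delta (T : finType) (y : T) (G : T -> R) :
  \sum_a (y == a)%:R * G a = G y.
Proof.
rewrite (bigD1 y) //= eqxx mul1r big1 ?addr0 // => a /negbTE.
by rewrite eq_sym => ->; rewrite mul0r.
Qed.

Lemma sum_delta' (T : finType) (y : T) (G : T -> R) :
  \sum_a G a * (a == y)%:R = G y.
Proof.
rewrite -[RHS](sum_delta y); apply: eq_bigr => a _; by rewrite eq_sym mulrC.
Qed.

Lemma prod_if1 (T : finType) (j : T) (F : T -> R) :
  \prod_l (if l == j then F l else 1) = F j.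
Proof. by rewrite -big_mkcond big_pred1_eq. Qed.

Lemma prod_bool (T : finType) (b : T -> bool) :
  \prod_l (b l)%:R = [forall l, b l]%:R :> R.
Proof.
case: forallP => [H|/existsNP [l /negP /negbTE bl]].
  by rewrite big1 // => l _; rewrite H.
by rewrite (bigD1 l) //= bl mul0r.
Qed.

Definition Sq i (j k : 'I_i) : seq 'I_i := [seq a <- enum 'I_i | (a != j) && (a != k)].

Lemma mem_Sq i (j k l : 'I_i) : (l \in Sq j k) = (l != j) && (l != k).
Proof. by rewrite mem_filter mem_enum andbT. Qed.

Lemma uniq_Sq i (j k : 'I_i) : uniq (Sq j k).
Proof. by rewrite filter_uniq // enum_uniq. Qed.

Lemma size_Sq i (j k : 'I_i.+2) : j != k -> size (Sq j k) = i.
Proof.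
move=> jk.
have -> : Sq j k = enum [pred a | (a != j) && (a != k)] by rewrite /Sq enumT /enum_mem.
rewrite -cardE.
have := cardC [pred a : 'I_i.+2 | (a != j) && (a != k)].
rewrite card_ord.
have -> : #|[predC [pred a : 'I_i.+2 | (a != j) && (a != k)]]| = 2%N.
  have -> : #|[predC [pred a : 'I_i.+2 | (a != j) && (a != k)]]| = #|pred2 j k|.
    by apply: eq_card => a; rewrite !inE negb_and !negbK.
  by rewrite card2 jk.
by rewrite addn2 => -[].
Qed.


Definition irv i (w : 'rV[R]_n) (j k : 'I_i.+1) (v : 'I_i.+1 -> 'rV[R]_n) : 'I_i -> 'rV[R]_n :=
  fun l => if val l == 0%N then w else v (nth j (Sq j k) (val l).-1).

Section Core.
Variables (i : nat) (c : sconst R n) (j k : 'I_i.+2) (jk : (j < k)%N).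
Variables (v : 'I_i.+2 -> 'rV[R]_n) (w : {ffun 'I_i.+1 -> 'I_n}).

Let S := Sq j k.
Let jnk : j != k. Proof. by rewrite neq_ltn jk. Qed.
Let sizeS : size S = i. Proof. exact: size_Sq. Qed.

Let Q (x : {ffun 'I_i.+2 -> 'I_n}) : R :=
  \prod_(l' < i) (x (nth j S l') == w (lift ord0 l'))%:R.

Lemma ins_rem_eq m x :
  (ins_rem m j k x == w)%:R = (m == w ord0)%:R * Q x :> R.
Proof.
have -> : (ins_rem m j k x == w) = [forall l, ins_rem m j k x l == w l].
  by apply/eqP/forallP => [-> //|H]; apply/ffunP => l; apply/eqP/H.
rewrite -prod_bool big_ord_recl !ffunE /=; congr (_ * _).
by apply: eq_bigr => l _; rewrite ffunE.
Qed.


Let T (l : 'I_i.+2) (y : 'I_n) : R :=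
  \prod_(l' < i | nth j S l' == l) (y == w (lift ord0 l'))%:R.
Let E (l : 'I_i.+2) : R :=
  \prod_(l' < i | nth j S l' == l) v l 0 (w (lift ord0 l')).
Let G (a b : 'I_n) (l : 'I_i.+2) (y : 'I_n) : R :=
  v l 0 y * ((if l == j then (y == a)%:R else 1) * (if l == k then (y == b)%:R else 1) * T l y).

Lemma QT (x : {ffun 'I_i.+2 -> 'I_n}) : Q x = \prod_l T l (x l).
Proof.
rewrite /Q (partition_big (fun l' : 'I_i => nth j S l') xpredT) //=.
apply: eq_bigr => l _; apply: eq_bigr => l' /eqP ->; by [].
Qed.

Lemma Gprod a b (x : {ffun 'I_i.+2 -> 'I_n}) : \prod_l G a b l (x l) =
  \prod_l v l 0 (x l) * ((x j == a)%:R * (x k == b)%:R * Q x).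
Proof.
rewrite /G !big_split /= !prod_if1 QT; by [].
Qed.

Lemma nthS_neq (l' : 'I_i) : (nth j S l' != j) && (nth j S l' != k).
Proof. by rewrite -mem_Sq mem_nth // sizeS. Qed.

Lemma Gsum a b l : \sum_y G a b l y =
  (if l == j then v j 0 a else 1) * (if l == k then v k 0 b else 1) * E l.
Proof.
have Tj : forall y, T j y = 1.
  by move=> y; rewrite /T big_pred0 // => l'; have /andP[/negbTE] := nthS_neq l'.
have Tk : forall y, T k y = 1.
  by move=> y; rewrite /T big_pred0 // => l'; have /andP[_ /negbTE] := nthS_neq l'.
have Ej : E j = 1.
  by rewrite /E big_pred0 // => l'; have /andP[/negbTE] := nthS_neq l'.
have Ek : E k = 1.
  by rewrite /E big_pred0 // => l'; have /andP[_ /negbTE] := nthS_neq l'.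
have [lj|nlj] := eqVneq l j.
  subst l; rewrite Ej /G (negbTE jnk) !mulr1 -(sum_delta' a (fun y => v j 0 y)).
  by apply: eq_bigr => y _; rewrite eqxx Tj !mulr1.
have [lk|nlk] := eqVneq l k.
  subst l; rewrite Ek /G (negbTE nlj) !mulr1 mul1r -(sum_delta' b (fun y => v k 0 y)).
  by apply: eq_bigr => y _; rewrite eqxx Tk !mulr1 mul1r.
have lS : l \in S by rewrite mem_Sq nlj nlk.
have iS : (index l S < i)%N by rewrite -{2}sizeS index_mem.
pose L0 : 'I_i := Ordinal iS.
have eqL : forall l' : 'I_i, (nth j S l' == l) = (l' == L0).
  move=> l'; apply/eqP/eqP => [E1|->]; last by rewrite /= nth_index.
  apply: val_inj => /=; rewrite -E1 index_uniq // ?sizeS //; exact: uniq_Sq.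
rewrite /G /T /E (negbTE nlj) (negbTE nlk) !mul1r.
rewrite (eq_bigl _ _ eqL) big_pred1_eq.
under eq_bigr do rewrite (eq_bigl _ _ eqL) big_pred1_eq.
under eq_bigr do rewrite mul1r. exact: sum_delta'.
Qed.


Let P : R := \prod_(l' < i) v (nth j S l') 0 (w (lift ord0 l')).

Lemma EP : \prod_l E l = P.
Proof.
rewrite /P (partition_big (fun l' : 'I_i => nth j S l') xpredT) //=.
by apply: eq_bigr => l _; apply: eq_bigr => l' /eqP ->.
Qed.

Lemma core :
  \sum_(x : {ffun 'I_i.+2 -> 'I_n}) (\prod_l v l 0 (x l)) *
      \sum_m c (x j) (x k) m * (ins_rem m j k x == w)%:R
  = \prod_l (irv (lbr c (v j) (v k)) j k v l) 0 (w l).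
Proof.
have E1 : forall x : {ffun 'I_i.+2 -> 'I_n},
    \sum_m c (x j) (x k) m * (ins_rem m j k x == w)%:R =
    \sum_a \sum_b c a b (w ord0) * ((x j == a)%:R * (x k == b)%:R * Q x).
  move=> x; under eq_bigr do rewrite ins_rem_eq mulrA.
  rewrite -mulr_suml sum_delta'.
  transitivity (\sum_a (x j == a)%:R * \sum_b (x k == b)%:R * (c a b (w ord0) * Q x)).
    by under eq_bigr do rewrite sum_delta; rewrite sum_delta.
  apply: eq_bigr => a _; rewrite mulr_sumr; apply: eq_bigr => b _; ring.
transitivity (\sum_a \sum_b c a b (w ord0) * (v j 0 a * v k 0 b * P)).
  transitivity (\sum_(x : {ffun 'I_i.+2 -> 'I_n}) \sum_a \sum_b c a b (w ord0) *
                   (\prod_l G a b l (x l))).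
    apply: eq_bigr => x _; rewrite E1 mulr_sumr; apply: eq_bigr => a _.
    rewrite mulr_sumr; apply: eq_bigr => b _; rewrite Gprod; ring.
  rewrite exchange_big; apply: eq_bigr => a _; rewrite exchange_big.
  apply: eq_bigr => b _; rewrite -mulr_sumr; congr (_ * _).
  rewrite -bigA_distr_bigA /=.
  under eq_bigr do rewrite Gsum.
  by rewrite !big_split /= !prod_if1 EP.
rewrite big_ord_recl /irv /= mxE.
rewrite mulr_suml; apply: eq_bigr => a _.
rewrite mulr_suml; apply: eq_bigr => b _.
rewrite /P; ring.
Qed.

End Core.

End C.

Section D.
Variable R : realType.
Variable n : nat.

Lemma eq_ev i (f : cochain R n i) (v v' : 'I_i -> 'rV[R]_n) :
  (forall l, v l = v' l) -> ev f v = ev f v'.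
Proof. by move=> H; apply: eq_bigr => y _; under eq_bigr do rewrite H. Qed.

Lemma ev_diff i (c : sconst R n) (f : cochain R n i) (v : 'I_i.+1 -> 'rV[R]_n) :
  ev (ce_diff_fun c f) v = \sum_(j < i.+1) \sum_(k < i.+1 | (j < k)%N)
     (-1) ^+ (j + k) * ev f (irv (lbr c (v j) (v k)) j k v).
Proof.
case: i => [|i] in f v *.
  rewrite big1; last by move=> j _; rewrite big1 // => k; rewrite !ord1.
  rewrite /ev big1 // => x _; rewrite ffunE [X in _ * X]big1 ?mulr0 // => j _.
  by rewrite big1 // => k; rewrite !ord1.
rewrite /ev; under eq_bigr do rewrite ffunE.
transitivity (\sum_(j < i.+2) \sum_(k < i.+2 | (j < k)%N) (-1) ^+ (j + k) *
  \sum_(x : {ffun 'I_i.+2 -> 'I_n}) (\prod_l v l 0 (x l)) *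
      \sum_m c (x j) (x k) m * f (ins_rem m j k x)).
  under eq_bigr do rewrite mulr_sumr.
  rewrite exchange_big; apply: eq_bigr => j _.
  under eq_bigr do rewrite mulr_sumr.
  rewrite exchange_big; apply: eq_bigr => k jk.
  rewrite mulr_sumr; apply: eq_bigr => x _; ring.
apply: eq_bigr => j _; apply: eq_bigr => k jk; congr (_ * _).
have fE : forall y, f y = \sum_a (y == a)%:R * f a by move=> y; rewrite sum_delta.
transitivity (\sum_w (\sum_(x : {ffun 'I_i.+2 -> 'I_n}) (\prod_l v l 0 (x l)) *
      \sum_m c (x j) (x k) m * (ins_rem m j k x == w)%:R) * f w).
  symmetry.
  under eq_bigr do rewrite mulr_suml.
  rewrite exchange_big; apply: eq_bigr => x _.
  under eq_bigr do rewrite -mulrA mulr_suml.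
  rewrite -mulr_sumr; congr (_ * _).
  rewrite exchange_big; apply: eq_bigr => m _.
  rewrite [in RHS]fE mulr_sumr; apply: eq_bigr => w _; ring.
by apply: eq_bigr => w _; rewrite core.
Qed.

Lemma ev_irv_lin i (f : cochain R n i.+1) (j k : 'I_i.+2) (V : 'I_i.+2 -> 'rV[R]_n)
   (a : 'I_n -> R) (u : 'I_n -> 'rV[R]_n) :
  ev f (irv (\sum_m a m *: u m) j k V) = \sum_m a m * ev f (irv (u m) j k V).
Proof.
rewrite /ev.
under eq_bigr => y _ do rewrite big_ord_recl /irv /= summxE.
under [RHS]eq_bigr do rewrite mulr_sumr.
rewrite exchange_big; apply: eq_bigr => y _.
under [RHS]eq_bigr do rewrite big_ord_recl /irv /=.
rewrite !mulr_suml; apply: eq_bigr => m _.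
rewrite !mxE; ring.
Qed.

Lemma lbr_delta (c : sconst R n) a b :
  lbr c (delta_mx 0 a) (delta_mx 0 b) = \row_p c a b p.
Proof.
apply/rowP => p; rewrite !mxE.
under eq_bigr do under eq_bigr do rewrite !mxE.
rewrite (bigD1 a) //= [X in _ + X]big1 ?addr0; last first.
  by move=> a' /negbTE na; rewrite big1 // => b' _; rewrite na /= !mul0r.
rewrite (bigD1 b) //= [X in _ + X]big1 ?addr0; last first.
  by move=> b' /negbTE nb; rewrite nb /= mulr0 mul0r.
by rewrite !eqxx /= !mul1r.
Qed.

Lemma pull_diff i (c c' : sconst R n) (A : 'M[R]_n) (f : cochain R n i) :
  (forall u v, lbr c u v *m A = lbr c' (u *m A) (v *m A)) ->
  ce_diff_fun c (pull A f) = pull A (ce_diff_fun c' f).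
Proof.
move=> H; apply/ffunP => x; rewrite [RHS]ffunE ev_diff ffunE.
apply: eq_bigr => j _; apply: eq_bigr => k jk; congr (_ * _).
case: i => [|i] in f x j k jk *; first by move: jk; rewrite !ord1.
have irvE : forall m, ev f (fun l => row (ins_rem m j k x l) A) =
    ev f (irv (row m A) j k (fun l => row (x l) A)).
  by move=> m; apply: eq_ev => l; rewrite /irv ffunE; case: ifP.
under eq_bigr do rewrite ffunE irvE.
rewrite -ev_irv_lin; congr (ev f (irv _ j k _)).
rewrite !rowE -!H lbr_delta mulmx_sum_row.
by apply: eq_bigr => m _; rewrite mxE.
Qed.

End D.

Section E.
Variable R : realType.
Variable n : nat.

Definition rk (c : sconst R n) i := \dim (ce_diff c i @: alt_space R n i)%VS.

Lemma betti_rk (c : sconst R n) i :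
  betti c i.+1 = ((\dim (alt_space R n i.+1) - rk c i.+1) - rk c i)%N.
Proof.
rewrite /= /cocycles /rk; congr (_ - _)%N.
have := limg_ker_dim (ce_diff c i.+1) (alt_space R n i.+1); move=> <-; by rewrite addnK.
Qed.

Lemma lie_iso_sym (c c' : sconst R n) : lie_iso c c' -> lie_iso c' c.
Proof.
case=> A [uA H]; exists (invmx A); split; first by rewrite unitmx_inv.
move=> u v; have := H (u *m invmx A) (v *m invmx A).
rewrite !mulmxKV // => <-; by rewrite mulmxK.
Qed.

Definition pullL i (A : 'M[R]_n) : 'End(cochain R n i) := linfun (@pull R n i A).

Lemma pullLE i A f : pullL i A f = pull A f.
Proof. by rewrite linfunE //; exact: pull_lin. Qed.

Lemma rk_iso_le (c c' : sconst R n) i : lie_iso c c' -> (rk c' i <= rk c i)%N.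
Proof.
case=> A [uA H]; rewrite /rk.
have inj : forall j, lker (pullL j A) == 0%VS.
  move=> j; apply/lker0P => f g; rewrite !pullLE => E.
  by rewrite -(pull1 f) -(pull1 g) -(mulVmx uA) -!pull_mul E.
rewrite -(limg_dim_eq (f := pullL i.+1 A)); last by rewrite (eqP (inj _)) capv0.
rewrite -limg_comp.
have -> : (pullL i.+1 A \o ce_diff c' i = ce_diff c i \o pullL i A)%VF.
  apply/lfunP => f; rewrite !comp_lfunE !pullLE !ce_diffE.
  by rewrite (pull_diff _ H).
rewrite limg_comp; apply: dimvS; apply: limgS.
apply/subvP => g /memv_imgP [h hU ->]; rewrite pullLE; exact: pull_alt.
Qed.

Lemma betti_iso (c c' : sconst R n) i : lie_iso c c' -> betti c i.+1 = betti c' i.+1.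
Proof.
move=> H; have H' := lie_iso_sym H.
rewrite !betti_rk.
have -> : rk c i.+1 = rk c' i.+1 by apply/eqP; rewrite eqn_leq !rk_iso_le.
have -> : rk c i = rk c' i by apply/eqP; rewrite eqn_leq !rk_iso_le.
by [].
Qed.

End E.

Section B.
Local Open Scope classical_set_scope.
Local Open Scope ring_scope.
Variable R : realType.

Definition A01 : set R := [set t | 0 <= t <= 1].
Definition ct (g : R -> R) := g @ within A01 (nbhs (0:R)) --> g 0.

Lemma ct_cst a : ct (fun _ => a).
Proof. exact: cvg_cst. Qed.

Lemma ct_add g h : ct g -> ct h -> ct (fun t => g t + h t).
Proof. move=> cg ch; exact: (cvgD cg ch). Qed.

Lemma ct_mul g h : ct g -> ct h -> ct (fun t => g t * h t).
Proof. move=> cg ch; exact: (cvgM cg ch). Qed.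

Lemma ct_sum (I : Type) (r : seq I) (P : pred I) (g : I -> R -> R) :
  (forall i, P i -> ct (g i)) -> ct (fun t => \sum_(i <- r | P i) g i t).
Proof.
move=> H; elim: r => [|x r IH].
  have -> : (fun t => \sum_(i <- [::] | P i) g i t) = fun _ => 0.
    by apply: funext => t; rewrite big_nil.
  exact: ct_cst.
case Px: (P x).
  have -> : (fun t => \sum_(i <- x :: r | P i) g i t) =
            fun t => g x t + \sum_(i <- r | P i) g i t.
    by apply: funext => t; rewrite big_cons Px.
  exact: ct_add (H _ Px) IH.
have -> : (fun t => \sum_(i <- x :: r | P i) g i t) =
          fun t => \sum_(i <- r | P i) g i t.
  by apply: funext => t; rewrite big_cons Px.
exact: IH.
Qed.

Lemma ct_prod (I : Type) (r : seq I) (P : pred I) (g : I -> R -> R) :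
  (forall i, P i -> ct (g i)) -> ct (fun t => \prod_(i <- r | P i) g i t).
Proof.
move=> H; elim: r => [|x r IH].
  have -> : (fun t => \prod_(i <- [::] | P i) g i t) = fun _ => 1.
    by apply: funext => t; rewrite big_nil.
  exact: ct_cst.
case Px: (P x).
  have -> : (fun t => \prod_(i <- x :: r | P i) g i t) =
            fun t => g x t * \prod_(i <- r | P i) g i t.
    by apply: funext => t; rewrite big_cons Px.
  exact: ct_mul (H _ Px) IH.
have -> : (fun t => \prod_(i <- x :: r | P i) g i t) =
          fun t => \prod_(i <- r | P i) g i t.
  by apply: funext => t; rewrite big_cons Px.
exact: IH.
Qed.

Lemma ct_det m (M : R -> 'M[R]_m) :
  (forall i j, ct (fun t => M t i j)) -> ct (fun t => \det (M t)).
Proof.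
move=> H; rewrite /determinant.
apply: ct_sum => s _; apply: ct_mul; first exact: ct_cst.
by apply: ct_prod => i _; exact: H.
Qed.

Lemma ct_mulmx p q r s (X : 'M[R]_(p, q)) (M : R -> 'M[R]_(q, r)) (Y : 'M[R]_(r, s)) :
  (forall i j, ct (fun t => M t i j)) -> forall i j, ct (fun t => (X *m M t *m Y) i j).
Proof.
move=> H i j.
have -> : (fun t => (X *m M t *m Y) i j) =
   fun t => \sum_k (\sum_l X i l * M t l k) * Y k j.
  by apply: funext => t; rewrite mxE; apply: eq_bigr => k _; rewrite mxE.
apply: ct_sum => k _; apply: ct_mul; last exact: ct_cst.
apply: ct_sum => l _; apply: ct_mul; [exact: ct_cst|exact: H].
Qed.

Lemma rank_lsc p q (M : R -> 'M[R]_(p, q)) :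
  (forall i j, ct (fun t => M t i j)) ->
  \forall t \near within A01 (nbhs (0:R)), (\rank (M 0%R) <= \rank (M t))%N.
Proof.
move=> H; set r := \rank (M 0).
have rp : (r <= p)%N := rank_leq_row _.
have rq : (r <= q)%N := rank_leq_col _.
pose X : 'M[R]_(r, p) := pid_mx r *m invmx (col_ebase (M 0)).
pose Y : 'M[R]_(q, r) := invmx (row_ebase (M 0)) *m pid_mx r.
have XY : X *m M 0 *m Y = 1%:M.
  rewrite /X /Y -{2}(mulmx_ebase (M 0)).   
  rewrite !mulmxA mulmxK ?row_ebase_unit // mulmxKV ?col_ebase_unit //.
  by rewrite !pid_mx_id // pid_mx_1.
have cd := ct_det (ct_mulmx (X:=X) (Y:=Y) H).
have cd' : (fun t => \det (X *m M t *m Y)) @ within A01 (nbhs (0:R)) -->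
    \det (X *m M 0 *m Y) := cd.
have := cvgr_neq0 _ cd'; rewrite XY det1 => /(_ (within_filter _ _) (oner_neq0 _)).
apply: filterS => t Ht.
have uT : X *m M t *m Y \in unitmx by rewrite unitmxE unitfE.
have := mxrank_unit uT => E.
rewrite -{1}E; apply: leq_trans (mxrankM_maxl _ _) _; exact: mxrankM_maxr.
Qed.

Lemma near_pos (P : R -> Prop) :
  (\forall t \near within A01 (nbhs (0:R)), P t) -> exists t : R, 0 < t <= 1 /\ P t.
Proof.
move=> /nbhs_ballP [e /= e0 He].
pose t := Num.min (e / 2) 1.
have t0 : 0 < t by rewrite lt_min ltr01 andbT divr_gt0.
have t1 : t <= 1 by rewrite ge_min lexx orbT.
exists t; split; first by rewrite t0 t1.
apply: He; last by rewrite /A01 /= t1 ltW.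
rewrite -ball_normE /ball_ /= sub0r normrN gtr0_norm //.
rewrite /t gt_min; apply/orP; left.
by rewrite ltr_pdivrMr // ltr_pMr // ltr1n.
Qed.

Lemma dim_span_b2mx (K : fieldType) (vT : vectType K) m (T : m.-tuple vT) :
  \dim <<T>>%VS = \rank (b2mx T).
Proof.
rewrite unlock /span_expanded_def /dimv /= mxrank_gen.
case: T => s /= H; move/eqP: (H) => E; subst m.
by congr (\rank (b2mx _)); apply: val_inj.
Qed.

Variable n : nat.

Lemma ct_v2r i (h : R -> cochain R n i) b :
  (forall x, ct (fun t => h t x)) -> ct (fun t => v2r (h t) 0 b).
Proof.
move=> H.
have sE : forall (a y : R^o), a *: y = a * y := fun _ _ => erefl.
pose d (x : {ffun 'I_i -> 'I_n}) : cochain R n i := [ffun y => (y == x)%:R].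
have -> : (fun t => v2r (h t) 0 b) = fun t => \sum_x h t x * v2r (d x) 0 b.
  apply: funext => t.
  have hE : h t = \sum_x h t x *: d x.
    apply/ffunP => y; rewrite sum_ffunE (bigD1 y) //= big1 ?addr0.
      by rewrite !ffunE eqxx sE mulr1.
    by move=> x /negbTE yx; rewrite !ffunE eq_sym yx sE mulr0.
  rewrite {1}hE linear_sum summxE; apply: eq_bigr => x _.
  by rewrite linearZ mxE.
apply: ct_sum => x _; apply: ct_mul; [exact: H|exact: ct_cst].
Qed.

Lemma rk_lsc (C : R -> sconst R n) i :
  (forall a b c, ct (fun t => C t a b c)) ->
  \forall t \near within A01 (nbhs (0:R)), (rk (C 0%R) i <= rk (C t) i)%N.
Proof.
move=> HC.
have rkE : forall c, rk c i =
    \rank (b2mx (map_tuple (ce_diff c i) (vbasis (alt_space R n i)))).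
  move=> c; rewrite /rk -{1}(span_basis (vbasisP (alt_space R n i))) limg_span.
  by rewrite -dim_span_b2mx.
pose M t := b2mx (map_tuple (ce_diff (C t) i) (vbasis (alt_space R n i))).
have : forall a b, ct (fun t => M t a b).
  move=> a b; rewrite /M.
  have -> : (fun t => b2mx (map_tuple (ce_diff (C t) i) (vbasis (alt_space R n i))) a b)
     = fun t => v2r (ce_diff_fun (C t) (tnth (vbasis (alt_space R n i)) a)) 0 b.
    by apply: funext => t; rewrite mxE tnth_map ce_diffE.
  apply: ct_v2r => x.
  under [X in ct X]funext do rewrite ffunE.
  apply: ct_sum => j _; apply: ct_sum => k _; apply: ct_mul; first exact: ct_cst.
  apply: ct_sum => m _; apply: ct_mul; [exact: HC|exact: ct_cst].
move/rank_lsc; apply: filterS => t; by rewrite !rkE.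
Qed.

End B.

Lemma coef_neg (R : realType) (n : nat) (c' c : sconst R n) k :
  (poincare c' - poincare c)`_k < 0 ->
  exists i, (1 <= i <= n)%N /\ (betti c' i < betti c i)%N.
Proof.
have -> : (poincare c' - poincare c)`_k =
    \sum_(1 <= i < n.+1) ((betti c' i)%:Z - (betti c i)%:Z) * (k == i)%:R.
  rewrite coefB /poincare !coefD !coef_sum opprD addrACA subrr add0r -sumrB.
  by apply: eq_bigr => i _; rewrite !coefZ !coefXn mulrBl.
move=> Hneg; apply/not_existsP => Hall; move: Hneg; apply/negP; rewrite -leNgt.
rewrite big_nat_cond; apply: sumr_ge0 => i /andP[/andP[i1 iN] _].
apply: mulr_ge0; last by case: (k == i).
rewrite subr_ge0 lez_nat leqNgt; apply/negP => lt.
by apply: (Hall i); split => //; rewrite i1 -ltnS.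
Qed.

Unset Implicit Arguments.

Theorem proposition4 (R : realType) (n : nat) (c' c : sconst R n)
  (C : R -> sconst R n) :
  is_lie c' -> is_lie c ->
  is_deformation C c' c ->
  ~ lie_iso c' c ->
  (exists k : nat, (poincare c' - poincare c)`_k < 0) ->
  ~ plateau C.
Proof.
move=> _ _ [_ [Hcont [C0 Hiso1]]] _ [k /coef_neg [[|i] [/andP[i1 iN] Hlt]]] //.
case=> _ Hplat.
have Hct : forall a b d, ct (fun t => C t a b d).
  move=> a b d; have := (subspace_continuousP _ _).1 (Hcont a b d) 0.
  by apply; rewrite /= lexx ler01.
have N1 := rk_lsc i.+1 Hct.
have N2 := rk_lsc i Hct.
have [t [/andP[t0 t1] [r1 r2]]] := near_pos (filterI N1 N2).
have Ht : betti (C t) i.+1 = betti c i.+1.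
  rewrite (betti_iso i (Hplat t _)); last by rewrite t0 t1.
  exact: betti_iso.
have : (betti (C t) i.+1 <= betti (C 0%R) i.+1)%N.
  rewrite !betti_rk; move: r1 r2; lia.
by rewrite Ht C0 leqNgt Hlt.
Qed.
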